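(* Let $k\geq3$, $A=\{0,1,\dots,k-1\}$, $N=k-1$ and let $T\colon A^{N^2}\to A$ be given by $T(x_{1,1},\dots,x_{1,N},\dots,x_{N,1},\dots,x_{N,N})=1$ if $x_{i,j}=i$ for all $i,j$ or $x_{i,j}=j$ for all $i,j$, and $0$ otherwise. Then \[\{T\}^{*(1)}=\{\mathrm{id}_A\}\cup\{f\colon A\to A : f(0)=f(1)=0\}.\]
   Context: An $m$-ary $g$ commutes with an $n$-ary $h$ if $g\bigl((h((x_{ij})_{j}))_{i}\bigr)=h\bigl((g((x_{ij})_{i}))_{j}\bigr)$ for all $(x_{ij})\in A^{m\times n}$. For $F$ a set of finitary operations on $A$ (positive arity), $F^*$ is the set of all finitary operations of positive arity commuting with every member of $F$, and $F^{*(1)}$ is the set of unary members of $F^*$. *)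

(* Defs.v *)
From mathcomp Require Import all_boot.
Set Implicit Arguments. Unset Strict Implicit. Unset Printing Implicit Defensive.

Definition op (A : Type) (n : nat) := ('I_n -> A) -> A.

Definition commutes (A : Type) (m n : nat) (g : op A m) (h : op A n) : Prop :=
  forall x : 'I_m -> 'I_n -> A,
    g (fun i => h (fun j => x i j)) = h (fun j => g (fun i => x i j)).

Definition opset (A : Type) := forall n : nat, op A n -> Prop.

Definition opsing (A : Type) (n0 : nat) (h0 : op A n0) : opset A :=
  fun n h => existT (op A) n h = existT (op A) n0 h0.

Definition centralizer (A : Type) (F : opset A) : opset A :=
  fun m g => 0 < m /\ forall n (h : op A n), 0 < n -> F n h -> @commutes A m n g h.

(* F^{*(1)}, viewed as a set of self-maps f : A -> A
   (the unary operation associated with f is x |-> f (x 0)). *)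
Definition centralizer1 (A : Type) (F : opset A) (f : A -> A) : Prop :=
  @centralizer A F 1 (fun x : 'I_1 -> A => f (x ord0)).

(* The operation T : A^(N^2) -> A, with N = k-1, so A = {0,...,k-1} = 'I_N.+1.
   The variable with index p : 'I_(N*N) is x_{i,j} with
   i = p %/ N + 1, j = p %% N + 1 (row-major order x_{1,1},...,x_{N,N}). *)
Definition T_op (N : nat) : op 'I_N.+1 (N * N) :=
  fun x =>
    if [forall p, nat_of_ord (x p) == p %/ N + 1]
       || [forall p, nat_of_ord (x p) == p %% N + 1]
    then inord 1 else ord0.

(* Main.v *)
Require Import Defs.
From mathcomp Require Import all_boot.
From mathcomp Require Import zify.
From Stdlib Require Import FunctionalExtensionality.

Section S.
Variable N : nat.
Hypothesis hN2 : 2 <= N.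
Local Notation A := 'I_N.+1.

Lemma T_cases (x : 'I_(N*N) -> A) : T_op x = inord 1 \/ T_op x = ord0.
Proof. rewrite /T_op; case: ifP; auto. Qed.

Lemma NN_pos : 0 < N * N. Proof. nia. Qed.

Lemma T_const (c : A) : T_op (fun _ => c) = ord0.
Proof.
rewrite /T_op; case: ifP => // /orP [] /forallP H; exfalso.
- have H0 := H (Ordinal NN_pos).
  have HN : N < N * N by nia.
  have H1 := H (Ordinal HN).
  move: H0 H1 => /= /eqP -> /eqP; rewrite div0n divnn; case: N hN2 => //.
- have H0 := H (Ordinal NN_pos).
  have HN : 1 < N * N by nia.
  have H1 := H (Ordinal HN).
  move: H0 H1 => /= /eqP -> /eqP; rewrite mod0n modn_small //.
Qed.

Lemma no_surj (f : A -> A) (x : 'I_(N*N) -> A) (g : 'I_(N*N) -> nat) :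
  f ord0 = ord0 -> f (inord 1) = ord0 ->
  (forall p, nat_of_ord (f (x p)) = g p) ->
  (forall y : nat, 0 < y <= N -> exists p, g p = y) -> False.
Proof.
move=> f0 f1 Hg Hy.
have n10 : (inord 1 : A) != ord0.
  by apply/eqP => /(congr1 val); rewrite /= inordK //; case: N hN2.
have sub : [set: A] \subset f @: ([set: A] :\ inord 1).
  apply/subsetP => y _.
  have [->|ny] := eqVneq y ord0.
    by rewrite -f0; apply: imset_f; rewrite !inE eq_sym n10.
  have [|p gp] := Hy y.
    apply/andP; split; last by rewrite -ltnS.
    by rewrite lt0n; apply: contra ny => /eqP h; apply/eqP/val_inj.
  have -> : y = f (x p) by apply/val_inj; rewrite /= Hg gp.
  have [e|ne] := eqVneq (x p) (inord 1).
    by rewrite e f1 -f0; apply: imset_f; rewrite !inE eq_sym n10.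
  by apply: imset_f; rewrite !inE ne.
have := subset_leq_card sub.
have := leq_imset_card f ([set: A] :\ inord 1).
rewrite cardsT card_ord cardsDS ?sub1set ?inE // cardsT cards1 card_ord subn1 /=.
move=> h1 h2; have := leq_trans h2 h1; by rewrite ltnn.
Qed.

Definition Rm (p : 'I_(N*N)) : A := inord (p %/ N + 1).

Lemma Rm_val p : nat_of_ord (Rm p) = p %/ N + 1.
Proof.
rewrite /Rm inordK // ltnS addn1 ltn_divLR; last by case: N hN2.
exact: ltn_ord.
Qed.

Definition Cm (p : 'I_(N*N)) : A := inord (p %% N + 1).

Lemma Cm_val p : nat_of_ord (Cm p) = p %% N + 1.
Proof. rewrite /Cm inordK // ltnS addn1 ltn_pmod //; by case: N hN2. Qed.

Lemma T_Rm : T_op Rm = inord 1.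
Proof.
rewrite /T_op; have -> // : [forall p, nat_of_ord (Rm p) == p %/ N + 1].
by apply/forallP => p; rewrite Rm_val.
Qed.

Lemma T_Cm : T_op Cm = inord 1.
Proof.
rewrite /T_op; have -> : [forall p, nat_of_ord (Cm p) == p %% N + 1].
  by apply/forallP => p; rewrite Cm_val.
by rewrite orbT.
Qed.

End S.
Arguments NN_pos {N}.
Arguments T_const {N}.
Arguments no_surj {N}.
Arguments Rm_val {N}.
Arguments Cm_val {N}.
Arguments T_Rm {N}.
Arguments T_Cm {N}.
Arguments T_cases {N}.

Theorem lemma3p2 (k N : nat) (hk : 3 <= k) (hN : k = N.+1)
  (f : 'I_N.+1 -> 'I_N.+1) :
  centralizer1 (@opsing _ (N * N) (T_op (N:=N))) f <->
  (f = id \/ (f ord0 = ord0 /\ f (inord 1) = ord0)).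
Proof.
have hN2 : 2 <= N by subst k.
clear hk hN.
have h1N : 1 < N.+1 by lia.
have n10 : (inord 1 : 'I_N.+1) != ord0.
  by apply/eqP => /(congr1 val); rewrite /= inordK.
split.
- move=> [_ H].
  have Hc : forall x : 'I_(N*N) -> 'I_N.+1, f (T_op x) = T_op (fun j => f (x j)).
    move=> x; have := H (N*N) (@T_op N) (NN_pos hN2) erefl (fun _ => x).
    by [].
  have f0 : f ord0 = ord0.
    by have := Hc (fun _ => ord0); rewrite !(T_const hN2).
  have := Hc (@Rm N); rewrite (T_Rm hN2).
  case: (T_cases (fun j => f (Rm N j))) => E; rewrite E => f1; last by right.
  left; move: E; rewrite /T_op; case: ifP => [/orP [] /forallP F|]; last first.
    by move=> _ /eqP; rewrite eq_sym (negbTE n10).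
  + move=> _; exfalso.
    have h0 := F (Ordinal (NN_pos hN2)).
    have HN : 1 < N * N by nia.
    have h1 := F (Ordinal HN).
    have e : Rm N (Ordinal (NN_pos hN2)) = Rm N (Ordinal HN).
      by apply/val_inj => /=; rewrite !(Rm_val hN2) /= div0n divn_small.
    move: h0 h1; rewrite /= e => /eqP ->; rewrite mod0n modn_small //.
  + move=> _; apply: functional_extensionality_dep => i /=.
    have [->|ni] := eqVneq i ord0; first by [].
    have hi : (i.-1 * N < N * N)%N.
      rewrite ltn_mul2r; have := ltn_ord i; lia.
    have := F (Ordinal hi); rewrite /=.
    have -> : Rm N (Ordinal hi) = i.
      apply/val_inj => /=; rewrite (Rm_val hN2) /= mulnK; last by lia.
      by rewrite addn1 prednK // lt0n; apply: contra ni => /eqP h; apply/eqP/val_inj.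
    move/eqP => e; apply/val_inj; rewrite /= e; rewrite /= mulnK; last by lia.
    rewrite addn1 prednK // lt0n.
    by apply: contra ni => /eqP h; apply/eqP/val_inj.
- case=> [->|[f0 f1]].
  + by split => // n h _ _ x.
  + split => // n h hn E.
    pose P (s : {n : nat & op 'I_N.+1 n}) :=
      commutes (fun x : 'I_1 -> 'I_N.+1 => f (x ord0)) (projT2 s).
    change (P (existT _ n h)); rewrite E /P /= => x.
    have -> : f (T_op (fun j => x ord0 j)) = ord0.
      by case: (T_cases (fun j => x ord0 j)) => ->.
    rewrite /T_op; case: ifP => // /orP [] /forallP F; exfalso.
    * apply: (@no_surj N hN2 f (x ord0) (fun p => p %/ N + 1) f0 f1).
        by move=> p; apply/eqP; exact: F p.
      move=> y /andP [y0 yN].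
      have hy : (y.-1 * N < N * N)%N by rewrite ltn_mul2r; lia.
      exists (Ordinal hy); rewrite /= mulnK; last by lia.
      by rewrite addn1 prednK.
    * apply: (@no_surj N hN2 f (x ord0) (fun p => p %% N + 1) f0 f1).
        by move=> p; apply/eqP; exact: F p.
      move=> y /andP [y0 yN].
      have hy : (y.-1 < N * N)%N by nia.
      exists (Ordinal hy); rewrite /= modn_small; first by rewrite addn1 prednK.
      lia.
Qed.
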